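(* Let $\mathcal{G}$ be a hereditary class of finite graphs. Then the following statements are equivalent. (1) $\mathcal{G}$ is clique-sparse, i.e. there is a constant $k$ such that $\widetilde{\omega}(G)\le k$ and $\mathsf{cideg}(G)\le k$ for all $G\in\mathcal{G}$. (2) There is a constant $d$ such that for every graph $G\in\mathcal{G}$, the graph obtained from $G$ by successively identifying true twins has maximum degree at most $d$. (3) Both $\widetilde{\omega}$ and $\alpha^{\ast}$ are bounded on $\mathcal{G}$. (4) Both $\widetilde{\omega}$ and $\theta^{\ast}$ are bounded on $\mathcal{G}$. (5) $\mathsf{cdeg}$ is bounded on $\mathcal{G}$. (6) There is an $n$ such that no graph in $\mathcal{G}$ contains any of $\mathscr{S}_n$, $\mathscr{M}^{KI}_n$, $\mathscr{M}^{KK}_n$, $\mathscr{A}^{KK}_n$, $\mathscr{H}^{KK}_n$ as an induced subgraph (i.e. $\mathcal{G}$ excludes a star, a split matching, a matching between two cliques, an anti-matching between two cliques, and a half-graph between two cliques as induced subgraphs).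
   Context: All graphs are finite and simple; a class is hereditary if it is closed under taking induced subgraphs. Two vertices are true twins if they have the same closed neighbourhood; identifying true twins means replacing them by a single vertex with that neighbourhood. Two vertices are equivalent if they lie in exactly the same maximal cliques. $\widetilde{\omega}(G)$ is the maximum over maximal cliques $K$ of the number of equivalence classes meeting $K$; $\mathsf{cideg}(G)$ is the maximum over vertices $v$ of the number of maximal cliques containing $v$; $\mathsf{cdeg}(G)$ is the maximum over maximal cliques $K$ of the number of other maximal cliques intersecting $K$. $\alpha^{\ast}(G)=\max_v \alpha(G[N[v]])$ and $\theta^{\ast}(G)=\max_v\theta(G[N[v]])$, where $\theta$ is the clique-cover number. A parameter is bounded on $\mathcal{G}$ if some constant bounds it on all members. For ordered sets $X=\{x_1,\dots,x_n\}$, $Y=\{y_1,\dots,y_n\}$ and a vertex $c$: $\mathscr{S}_n$ is the star with centre $c$ and leaves $X$; $\mathscr{M}^{KI}_n$ has edges $x_iy_i$ ($i\in[n]$) and $X$ a clique ($Y$ independent); $\mathscr{M}^{KK}_n$ has edges $x_iy_i$ and both $X$ and $Y$ cliques; $\mathscr{A}^{KK}_n$ has edges $x_iy_j$ for $i\neq j$ and both $X,Y$ cliques; $\mathscr{H}^{KK}_n$ has edges $x_iy_j$ for $i\le j$ and both $X,Y$ cliques. *)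

(* Defs.v *)
From HB Require Import structures.
From mathcomp Require Import all_boot.

Set Implicit Arguments.
Unset Strict Implicit.
Unset Printing Implicit Defensive.

Record sgraph := SGraph {
  vert : finType;
  adj : rel vert;
  adj_sym : symmetric adj;
  adj_irr : irreflexive adj }.

Definition induced_sub (H G : sgraph) : Prop :=
  exists f : vert H -> vert G,
    injective f /\ forall x y, @adj G (f x) (f y) = @adj H x y.

Definition hereditary (C : sgraph -> Prop) : Prop :=
  forall G H : sgraph, C G -> induced_sub H G -> C H.

Section Params.
Variable G : sgraph.
Local Notation V := (vert G).

Definition clique (K : {set V}) : bool :=
  [forall x in K, forall y in K, (x != y) ==> @adj G x y].

Definition maxcl (K : {set V}) : bool :=
  clique K && [forall K' : {set V}, (clique K' && (K \subset K')) ==> (K' == K)].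

Definition eqcl (v : V) : {set V} :=
  [set w | [forall K : {set V}, maxcl K ==> ((v \in K) == (w \in K))]].

Definition omt : nat :=
  \max_(K : {set V} | maxcl K) #|[set eqcl v | v in K]|.

Definition cideg : nat :=
  \max_(v : V) #|[set K : {set V} | maxcl K && (v \in K)]|.

Definition cdeg : nat :=
  \max_(K : {set V} | maxcl K)
     #|[set K' : {set V} | [&& maxcl K', K' != K & K :&: K' != set0]]|.

Definition indep (A : {set V}) : bool :=
  [forall x in A, forall y in A, ~~ @adj G x y].

Definition cnbhd (v : V) : {set V} := v |: [set w | @adj G v w].

Definition alpha_in (S : {set V}) : nat :=
  \max_(A : {set V} | (A \subset S) && indep A) #|A|.

Definition alphastar : nat := \max_(v : V) alpha_in (cnbhd v).

Definition cc_cover (S : {set V}) (k : nat) : bool :=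
  [exists P : {set {set V}},
     [&& #|P| <= k, [forall K in P, clique K && (K \subset S)]
       & \bigcup_(K in P) K == S]].

Lemma cc_cover_ex (S : {set V}) : exists k, cc_cover S k.
Proof.
exists #|[set [set x] | x in S]|.
apply/existsP; exists [set [set x] | x in S]; rewrite leqnn /=.
apply/andP; split.
  apply/forallP => K; apply/implyP => /imsetP [x xS ->].
  apply/andP; split; last by rewrite sub1set.
  apply/forallP => a; apply/implyP => /set1P ->.
  by apply/forallP => b; apply/implyP => /set1P ->; rewrite eqxx.
apply/eqP/setP => y; apply/bigcupP/idP.
  by case=> K /imsetP [x xS ->] /set1P ->.
move=> yS; exists [set y]; first exact: imset_f.
exact: set11.
Qed.

Definition theta_in (S : {set V}) : nat := ex_minn (cc_cover_ex S).

Definition thetastar : nat := \max_(v : V) theta_in (cnbhd v).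

Definition tw (v : V) : {set V} := [set w | cnbhd w == cnbhd v].

(* Vertices of the graph obtained by successively identifying true twins:
   the true-twin classes; two classes adjacent iff distinct and some
   representatives are adjacent. *)
Definition twin_classes : {set {set V}} := [set tw v | v : V].

Definition tq_adj (A B : {set V}) : bool :=
  (A != B) && [exists a in A, exists b in B, @adj G a b].

Definition twin_reduced_maxdeg_le (d : nat) : Prop :=
  forall A, A \in twin_classes ->
    #|[set B in twin_classes | tq_adj A B]| <= d.

End Params.

Definition srel (T : finType) (r : rel T) : rel T :=
  fun x y => (x != y) && (r x y || r y x).

Lemma srel_sym (T : finType) (r : rel T) : symmetric (srel r).
Proof. by move=> x y; rewrite /srel eq_sym orbC. Qed.

Lemma srel_irr (T : finType) (r : rel T) : irreflexive (srel r).
Proof. by move=> x; rewrite /srel eqxx. Qed.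

Definition mkG (T : finType) (r : rel T) : sgraph :=
  @SGraph T (srel r) (@srel_sym T r) (@srel_irr T r).

Definition star (n : nat) : sgraph :=
  @mkG (option 'I_n) (fun u v => (u == None) && (v != None)).

(* Two-part graphs on X = inl, Y = inr *)
Definition MKI (n : nat) : sgraph :=
  @mkG ('I_n + 'I_n)%type (fun u v =>
    match u, v with
    | inl i, inr j => i == j
    | inl _, inl _ => true
    | _, _ => false
    end).

Definition MKK (n : nat) : sgraph :=
  @mkG ('I_n + 'I_n)%type (fun u v =>
    match u, v with
    | inl i, inr j => i == j
    | inl _, inl _ => true
    | inr _, inr _ => true
    | _, _ => false
    end).

Definition AKK (n : nat) : sgraph :=
  @mkG ('I_n + 'I_n)%type (fun u v =>
    match u, v with
    | inl i, inr j => i != j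
    | inl _, inl _ => true
    | inr _, inr _ => true
    | _, _ => false
    end).

Definition HKK (n : nat) : sgraph :=
  @mkG ('I_n + 'I_n)%type (fun u v =>
    match u, v with
    | inl i, inr j => (i <= j)%N
    | inl _, inl _ => true
    | inr _, inr _ => true
    | _, _ => false
    end).

(* Main.v *)
Require Import Defs.
From mathcomp Require Import all_boot.
From mathcomp Require Import zify.
Set Implicit Arguments. Unset Strict Implicit. Unset Printing Implicit Defensive.

Section Basics.
Variable G : sgraph.
Local Notation V := (vert G).
Local Notation adj := (@adj G).

Lemma adjC (x y : V) : adj x y = adj y x. Proof. exact: adj_sym. Qed.
Lemma adjxx (x : V) : adj x x = false. Proof. exact: adj_irr. Qed.

Lemma cliqueP (K : {set V}) :
  reflect (forall x y, x \in K -> y \in K -> x != y -> adj x y) (clique K).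
Proof.
apply: (iffP forallP) => [H x y xK yK nxy | H x].
- by move: (H x); rewrite xK /= => /forallP/(_ y); rewrite yK nxy.
- apply/implyP=> xK; apply/forallP=> y; apply/implyP=> yK; apply/implyP; exact: H.
Qed.

Lemma maxclP (K : {set V}) : reflect (clique K /\ forall K', clique K' -> K \subset K' -> K' = K)
  (maxcl K).
Proof.
apply: (iffP andP) => [[c /forallP H]|[c H]]; split => //.
- by move=> K' cK' sK; apply/eqP; move: (H K'); rewrite cK' sK.
- by apply/forallP => K'; apply/implyP => /andP [c' s]; rewrite (H K' c' s).
Qed.

Lemma maxcl_clique (K : {set V}) : maxcl K -> clique K. Proof. by case/maxclP. Qed.

Lemma ext_max (K : {set V}) : clique K -> exists2 K', maxcl K' & K \subset K'.
Proof.
move=> cK; case: (@maxset_exists _ (fun K => clique K) K cK) => K' /maxsetP [c m] s.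
by exists K' => //; apply/maxclP; split => // B cB sB; apply: m.
Qed.

Lemma cl_adj (K : {set V}) x y : maxcl K -> x \in K -> y \in K -> x != y -> adj x y.
Proof. by move/maxcl_clique/cliqueP; apply. Qed.

Lemma clique1 (x : V) : clique [set x].
Proof. by apply/cliqueP => a b /set1P -> /set1P ->; rewrite eqxx. Qed.

Lemma clique2 (x y : V) : adj x y -> clique [set x; y].
Proof.
move=> a; apply/cliqueP => u w; rewrite !inE => /orP[]/eqP-> /orP[]/eqP->;
  rewrite ?eqxx // => _; by rewrite // adjC.
Qed.

Lemma in_cnbhd (v w : V) : (w \in cnbhd v) = (w == v) || adj v w.
Proof. by rewrite !inE. Qed.

Lemma maxcl_cnbhd (K : {set V}) v w : maxcl K -> v \in K -> w \in K -> w \in cnbhd v.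
Proof.
move=> m vK wK; rewrite in_cnbhd; case: eqP => //= /eqP nwv.
by apply: cl_adj m vK wK _; rewrite eq_sym.
Qed.

Lemma maxcl_twin (K : {set V}) x y : maxcl K -> x \in K -> cnbhd y = cnbhd x -> y \in K.
Proof.
move=> m xK e; case/maxclP: m => c H.
have cy : clique (y |: K).
  apply/cliqueP => a b; rewrite !inE => /orP[/eqP->|aK] /orP[/eqP->|bK]; rewrite ?eqxx //.
  - move=> nyb; have : b \in cnbhd y by rewrite e (maxcl_cnbhd (K:=K)) //; apply/maxclP.
    by rewrite in_cnbhd eq_sym (negbTE nyb).
  - move=> nay; have : a \in cnbhd y by rewrite e (maxcl_cnbhd (K:=K)) //; apply/maxclP.
    by rewrite in_cnbhd (negbTE nay) /= adjC.
  - by move=> nab; apply: (cliqueP _ c).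
have := H _ cy (subsetUr _ _) => <-; exact: setU11.
Qed.

Lemma tw_refl (x : V) : x \in tw x. Proof. by rewrite inE. Qed.
Lemma tw_eq (x y : V) : y \in tw x -> tw y = tw x.
Proof. by rewrite inE => /eqP e; apply/setP => z; rewrite !inE e. Qed.
Lemma tw_cn (x y : V) : y \in tw x -> cnbhd y = cnbhd x.
Proof. by rewrite inE => /eqP. Qed.
Lemma tw_class (x : V) : tw x \in twin_classes G. Proof. exact: imset_f. Qed.

Lemma tq_adjI (k x : V) : tw k != tw x -> adj k x -> tq_adj (tw k) (tw x).
Proof.
move=> n a; rewrite /tq_adj n /=; apply/existsP; exists k; rewrite tw_refl /=.
by apply/existsP; exists x; rewrite tw_refl.
Qed.

Lemma pick_max_ex (K : {set V}) : clique K ->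
  exists2 K', maxcl K' & K \subset K'.
Proof. exact: ext_max. Qed.

End Basics.

Lemma card_factor (T U W : finType) (f : T -> U) (g : T -> W) (D : {set T}) :
  {in D &, forall x y, g x = g y -> f x = f y} -> #|f @: D| <= #|g @: D|.
Proof.
move=> H; case: (set_0Vmem D) => [->|[x0 x0D]]; first by rewrite !imset0 cards0.
pose h w := f (odflt x0 [pick x in D | g x == w]).
apply: (leq_trans _ (leq_imset_card h _)); apply: subset_leq_card.
apply/subsetP => u /imsetP [x xD ->]; apply/imsetP; exists (g x); first exact: imset_f.
rewrite /h; case: pickP => [y /andP [yD /eqP e]|/(_ x)]; last by rewrite xD eqxx.
by rewrite /= (H y x).
Qed.

Section Params2.
Variable G : sgraph.
Local Notation V := (vert G).
Local Notation adj := (@adj G).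

Definition Scl (v : V) := [set K : {set V} | maxcl K && (v \in K)].
Definition Ncl (K : {set V}) :=
  [set K' : {set V} | [&& maxcl K', K' != K & K :&: K' != set0]].

Lemma cideg_le k : (forall v, #|Scl v| <= k) -> cideg G <= k.
Proof. by move=> H; apply/bigmax_leqP => v _; exact: H. Qed.
Lemma omt_le k : (forall K : {set V}, maxcl K -> #|[set eqcl v | v in K]| <= k) -> omt G <= k.
Proof. by move=> H; apply/bigmax_leqP => K; exact: H. Qed.
Lemma cdeg_le k : (forall K : {set V}, maxcl K -> #|Ncl K| <= k) -> cdeg G <= k.
Proof. by move=> H; apply/bigmax_leqP => K; exact: H. Qed.
Lemma cdeg_ge (K : {set V}) : maxcl K -> #|Ncl K| <= cdeg G.
Proof. by move=> m; exact: (@leq_bigmax_cond _ (fun K => maxcl K) (fun K => #|Ncl K|) K m). Qed.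
Lemma cideg_ge v : #|Scl v| <= cideg G.
Proof. exact: (@leq_bigmax_cond _ xpredT (fun v => #|Scl v|) v). Qed.
Lemma omt_ge (K : {set V}) : maxcl K -> #|[set eqcl v | v in K]| <= omt G.
Proof. by move=> m; exact: (@leq_bigmax_cond _ (fun K => maxcl K) (fun K => #|[set eqcl v | v in K]|) K m). Qed.

Lemma cideg_cdeg : cideg G <= (cdeg G).+1.
Proof.
apply: cideg_le => v; case: (set_0Vmem (Scl v)) => [->|[K0]]; first by rewrite cards0.
rewrite inE => /andP [m vK0].
apply: (leq_trans (subset_leq_card (_ : Scl v \subset K0 |: Ncl K0))).
  apply/subsetP => K; rewrite !inE => /andP [mK vK]; case: eqP => //= /eqP ne.
  rewrite mK /=; apply/set0Pn; exists v; rewrite inE vK0 vK.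
  done.
by rewrite cardsU1; have := cdeg_ge m; case: (K0 \notin _) => /= ?; lia.
Qed.

Lemma omt_cdeg : omt G <= 2 ^ cdeg G.
Proof.
apply: omt_le => K m.
pose g (v : V) := [set K' in Ncl K | v \in K'].
apply: (leq_trans (card_factor (g := g) _)).
  move=> v w vK wK e.
  have same : forall K', maxcl K' -> (v \in K') = (w \in K').
    move=> K' mK'; case: (K' =P K) => [->|/eqP ne]; first by rewrite vK wK.
    case: (K :&: K' =P set0) => [e0|/eqP ne0].
      have : v \notin K :&: K' by rewrite e0 inE.
      have : w \notin K :&: K' by rewrite e0 inE.
      by rewrite !inE vK wK /= => /negbTE -> /negbTE ->.
    have inN : K' \in Ncl K by rewrite inE mK' ne ne0.
    have := congr1 (fun S : {set {set V}} => K' \in S) e; by rewrite /g !inE mK' ne ne0.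
  apply/setP => u; rewrite !inE; apply: eq_forallb => K'.
  by case mK': (maxcl K') => //=; rewrite same.
apply: (@leq_trans #|powerset (Ncl K)|).
  apply: subset_leq_card; apply/subsetP => S /imsetP [v _ ->].
  by rewrite powersetE; apply/subsetP => K'; rewrite inE => /andP [].
by rewrite card_powerset leq_pexp2l // cdeg_ge.
Qed.

Lemma alpha_cideg : alphastar G <= (cideg G).+1.
Proof.
apply/bigmax_leqP => v _; apply/bigmax_leqP => A /andP [sA iA].
pose pk (a : V) := odflt set0 [pick K | maxcl K && (v \in K) && (a \in K)].
have pkP : forall a, a \in A :\ v -> maxcl (pk a) && (v \in pk a) && (a \in pk a).
  move=> a; rewrite !inE => /andP [nav aA].
  have : adj v a by move: (subsetP sA a aA); rewrite in_cnbhd (negbTE nav).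
  move/clique2 => /ext_max [K mK sK].
  rewrite /pk; case: pickP => [K' //|/(_ K)]; rewrite mK.
  by rewrite (subsetP sK) ?(subsetP sK a) // !inE eqxx ?orbT.
rewrite (cardsD1 v A).
have : #|pk @: (A :\ v)| <= cideg G.
  apply: leq_trans (cideg_ge v); apply: subset_leq_card; apply/subsetP => K.
  case/imsetP => a aA ->; have /andP [/andP [m vK] _] := pkP a aA; by rewrite inE m vK.
rewrite card_in_imset; first by case: (v \in A) => /= ?; lia.
move=> a b aA bA e; apply/eqP; apply/negP => /negP nab.
have /andP [/andP [m _] aK] := pkP a aA; have /andP [_ bK] := pkP b bA.
rewrite -e in bK; have := cl_adj m aK bK nab.
move: aA bA; rewrite !inE => /andP [_ aA] /andP [_ bA].
by move/forallP: iA => /(_ a); rewrite aA /= => /forallP /(_ b); rewrite bA /= => /negbTE ->.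
Qed.

Lemma theta_cideg : thetastar G <= cideg G.
Proof.
apply/bigmax_leqP => v _; apply: leq_trans (cideg_ge v).
rewrite /theta_in; case: ex_minnP => m _ Hmin; apply: Hmin.
apply/existsP; exists (Scl v); rewrite leqnn /=; apply/andP; split.
  apply/forallP => K; apply/implyP; rewrite inE => /andP [mK vK].
  rewrite maxcl_clique //=; apply/subsetP => w wK; exact: maxcl_cnbhd mK vK wK.
apply/eqP/setP => w; apply/bigcupP/idP => [[K]|wv].
  rewrite inE => /andP [mK vK] wK; exact: maxcl_cnbhd mK vK wK.
have : clique [set v; w].
  move: wv; rewrite in_cnbhd => /orP [/eqP ->|a]; last exact: clique2.
  by rewrite setUid; exact: clique1.
case/ext_max => K mK sK; exists K; first by rewrite inE mK (subsetP sK) // !inE eqxx.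
by rewrite (subsetP sK) // !inE eqxx orbT.
Qed.

Definition NQ (A : {set V}) := [set B in twin_classes G | tq_adj A B].
Definition cls (K : {set V}) := [set tw x | x in K].

Lemma maxcl_union (K : {set V}) : maxcl K -> K = \bigcup_(B in cls K) B.
Proof.
move=> m; apply/setP => x; apply/idP/bigcupP => [xK|[B /imsetP [y yK ->] xy]].
  by exists (tw x); [exact: imset_f | exact: tw_refl].
exact: maxcl_twin m yK (tw_cn xy).
Qed.

Lemma card_bigcup_le (I T : finType) (P : {set I}) (F : I -> {set T}) :
  #|\bigcup_(i in P) F i| <= \sum_(i in P) #|F i|.
Proof.
apply: (big_rec2 (fun (S : {set T}) (n : nat) => #|S| <= n)); first by rewrite cards0.
by move=> i S n _ h; apply: leq_trans (leq_card_setU _ _) _; rewrite leq_add2l.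
Qed.

Lemma cdeg_twin d : twin_reduced_maxdeg_le G d -> cdeg G <= 2 ^ ((d.+1) * (d.+1)).
Proof.
move=> H; apply: cdeg_le => K m.
case: (set_0Vmem K) => [K0|[k0 k0K]].
  rewrite (_ : Ncl K = set0) ?cards0 //; apply/setP => K'; rewrite !inE K0 set0I eqxx.
  by rewrite !andbF.
pose U := \bigcup_(A in cls K) (A |: NQ A).
have clsK : #|cls K| <= d.+1.
  apply: (@leq_trans #|tw k0 |: NQ (tw k0)|); last first.
    by rewrite cardsU1; have h0 : #|NQ (tw k0)| <= d := H _ (tw_class k0); move: h0; case: (_ \notin _) => /= h0; [by rewrite add1n ltnS | by rewrite add0n ltnW].
  apply: subset_leq_card; apply/subsetP => B /imsetP [k kK ->].
  case: (tw k0 =P tw k) => [->|/eqP ne]; first exact: setU11.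
  rewrite !inE tw_class tq_adjI ?orbT //; apply: cl_adj m k0K kK _.
  by apply: contraNneq ne => ->.
have cU : #|U| <= d.+1 * d.+1.
  apply: leq_trans (card_bigcup_le _ _) _.
  apply: (@leq_trans (\sum_(A in cls K) d.+1)); last first.
    by rewrite sum_nat_const leq_mul2r clsK orbT.
  apply: leq_sum => A /imsetP [k _ ->]; rewrite cardsU1.
  by have h0 : #|NQ (tw k)| <= d := H _ (tw_class k); move: h0; case: (_ \notin _) => /= h0; [by rewrite add1n ltnS | by rewrite add0n ltnW].
apply: (@leq_trans #|cls @: Ncl K|).
  rewrite card_in_imset // => K1 K2; rewrite !inE => /and3P [m1 _ _] /and3P [m2 _ _] e.
  by rewrite (maxcl_union m1) (maxcl_union m2) e.
apply: (@leq_trans #|powerset U|); last by rewrite card_powerset leq_pexp2l.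
apply: subset_leq_card; apply/subsetP => S /imsetP [K' + ->].
rewrite inE => /and3P [m' _ /set0Pn [k]]; rewrite inE => /andP [kK kK'].
rewrite powersetE; apply/subsetP => B /imsetP [x xK' ->].
apply/bigcupP; exists (tw k); first exact: imset_f.
case: (tw k =P tw x) => [->|/eqP ne]; first exact: setU11.
rewrite !inE tw_class tq_adjI ?orbT //; apply: cl_adj m' kK' xK' _.
by apply: contraNneq ne => ->.
Qed.

End Params2.

Lemma adj_mkG (T : finType) (r : rel T) x y : @adj (mkG r) x y = (x != y) && (r x y || r y x).
Proof. by []. Qed.

Section LB.
Variable G : sgraph.
Local Notation V := (vert G).
Local Notation adj := (@adj G).

Lemma omt_lb (X : {set V}) : clique X ->
  (forall x y, x \in X -> y \in X -> x != y ->
     exists z, (adj x z && ~~ adj y z && (z != y)) || (adj y z && ~~ adj x z && (z != x))) ->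
  #|X| <= omt G.
Proof.
move=> cX D; case/ext_max: cX => K mK sK.
apply: leq_trans (omt_ge mK).
have -> : #|X| = #|[set eqcl v | v in X]|.
  apply/esym/card_in_imset => x y xX yX e; apply/eqP; apply/negP => /negP nxy.
  have key : forall a b, a \in X -> b \in X -> eqcl a = eqcl b ->
      forall z, adj a z -> ~~ adj b z -> z != b -> False.
    move=> a b aX bX eab z az nbz zb; case/ext_max: (clique2 az) => K' mK' sK'.
    have aK' : a \in K' by rewrite (subsetP sK') // !inE eqxx.
    have zK' : z \in K' by rewrite (subsetP sK') // !inE eqxx orbT.
    have : b \in eqcl a by rewrite eab inE; apply/forallP => K2; apply/implyP.
    rewrite inE => /forallP /(_ K') ; rewrite mK' aK' /= eq_sym => /eqP bK'.
    case: (b =P z) => [bz|/eqP nbz2]; first by rewrite bz eqxx in zb.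
    by have := cl_adj mK' bK' zK' nbz2; rewrite (negbTE nbz).
  case: (D x y xX yX nxy) => z /orP [/andP [/andP [a b] c]|/andP [/andP [a b] c]].
  - exact: key xX yX e z a b c.
  - exact: key yX xX (esym e) z a b c.
by apply: subset_leq_card; apply/subsetP => u /imsetP [x xX ->]; apply: imset_f; apply: (subsetP sK).
Qed.

End LB.

Lemma alpha_star n : n <= alphastar (star n).
Proof.
pose A : {set vert (star n)} := [set Some i | i : 'I_n].
have cA : #|A| = n by rewrite card_imset ?card_ord //; exact: Some_inj.
apply: (@leq_trans (alpha_in (cnbhd (None : vert (star n))))); last first.
  exact: (@leq_bigmax (vert (star n)) (fun v => alpha_in (cnbhd v)) None).
rewrite -{1}cA; apply: (@leq_bigmax_cond {set vert (star n)} (fun B => (B \subset _) && indep B) (fun B => #|B|) A).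
apply/andP; split.
  by apply/subsetP => x /imsetP [i _ ->]; rewrite !inE.
apply/forallP => x; apply/implyP => /imsetP [i _ ->]; apply/forallP => y; apply/implyP => /imsetP [j _ ->].
by rewrite /star adj_mkG /= andbF.
Qed.

Lemma theta_star n : n <= thetastar (star n).
Proof.
apply: (@leq_trans (theta_in (cnbhd (None : vert (star n))))); last first.
  exact: (@leq_bigmax (vert (star n)) (fun v => theta_in (cnbhd v)) None).
rewrite /theta_in; case: ex_minnP => m /existsP [P /and3P [cP clP /eqP uP]] _.
apply: leq_trans cP.
pose pk (i : 'I_n) := odflt set0 [pick K in P | Some i \in K].
have pkP : forall i, (pk i \in P) && (Some i \in pk i).
  move=> i; have : (Some i : vert (star n)) \in cnbhd (None : vert (star n)) by rewrite !inE.
  rewrite -uP => /bigcupP [K KP iK]; rewrite /pk; case: pickP => [K' //|/(_ K)].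
  by rewrite KP iK.
apply: (@leq_trans #|pk @: [set: 'I_n]|).
  rewrite card_in_imset ?cardsT ?card_ord // => i j _ _ e; apply/eqP/negP => /negP nij.
  have /andP [KP iK] := pkP i; have /andP [_ jK] := pkP j; rewrite -e in jK.
  move/forallP: clP => /(_ (pk i)); rewrite KP /= => /andP [/cliqueP c _].
  have := c _ _ iK jK; rewrite /star adj_mkG /= andbF.
  by move=> h; suff: false by []; apply: h; apply: contra nij => /eqP [->].
by apply: subset_leq_card; apply/subsetP => K /imsetP [i _ ->]; have /andP [] := pkP i.
Qed.

Lemma omt_bip_gen (H : sgraph) (n : nat) (inj : 'I_n -> vert H) :
  injective inj ->
  (forall i j, i != j -> @adj H (inj i) (inj j)) ->
  (forall i j, i != j -> exists z,
     (@adj H (inj i) z && ~~ @adj H (inj j) z && (z != inj j)) ||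
     (@adj H (inj j) z && ~~ @adj H (inj i) z && (z != inj i))) ->
  n <= omt H.
Proof.
move=> injI cl D.
have cX : #|[set inj i | i : 'I_n]| = n by rewrite card_imset ?card_ord.
rewrite -{1}cX; apply: omt_lb.
  apply/cliqueP => x y /imsetP [i _ ->] /imsetP [j _ ->] nxy; apply: cl.
  by apply: contraNneq nxy => ->.
move=> x y /imsetP [i _ ->] /imsetP [j _ ->] nxy; apply: D.
by apply: contraNneq nxy => ->.
Qed.

Lemma omt_MKI n : n <= omt (MKI n).
Proof.
apply: (@omt_bip_gen (MKI n) n (fun i => inl i)); first by move=> ? ? [].
  by move=> i j nij; rewrite /MKI adj_mkG /= ?andbT; apply: contra nij => /eqP [->].
move=> i j nij; exists (inr i); rewrite /MKI !adj_mkG /= eqxx /=.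
by rewrite eq_sym (negbTE nij).
Qed.

Lemma omt_MKK n : n <= omt (MKK n).
Proof.
apply: (@omt_bip_gen (MKK n) n (fun i => inl i)); first by move=> ? ? [].
  by move=> i j nij; rewrite /MKK adj_mkG /= ?andbT; apply: contra nij => /eqP [->].
move=> i j nij; exists (inr i); rewrite /MKK !adj_mkG /= eqxx /=.
by rewrite eq_sym (negbTE nij).
Qed.

Lemma omt_AKK n : n <= omt (AKK n).
Proof.
apply: (@omt_bip_gen (AKK n) n (fun i => inl i)); first by move=> ? ? [].
  by move=> i j nij; rewrite /AKK adj_mkG /= ?andbT; apply: contra nij => /eqP [->].
move=> i j nij; exists (inr j); rewrite /AKK !adj_mkG /= eqxx /=.
by rewrite nij.
Qed.

Lemma omt_HKK n : n <= omt (HKK n).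
Proof.
apply: (@omt_bip_gen (HKK n) n (fun i => inl i)); first by move=> ? ? [].
  by move=> i j nij; rewrite /HKK adj_mkG /= ?andbT; apply: contra nij => /eqP [->].
move=> i j nij; case: (ltngtP i j) => [ij|ji|/val_inj e]; last by rewrite e eqxx in nij.
- exists (inr i); rewrite /HKK !adj_mkG /= leqnn /=.
  by rewrite leqNgt ij.
- exists (inr j); rewrite /HKK !adj_mkG /= leqnn /=.
  by rewrite orbF leqNgt ji.
Qed.

Lemma embed (T0 : finType) (r0 : rel T0) (G : sgraph) (phi : T0 -> vert G) :
  injective phi ->
  (forall x y, x != y -> @adj G (phi x) (phi y) = r0 x y || r0 y x) ->
  induced_sub (mkG r0) G.
Proof.
move=> inj H; exists phi; split => // x y; rewrite adj_mkG.
case: (x =P y) => [->|/eqP nxy]; first by rewrite adj_irr.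
by rewrite H.
Qed.

Lemma star_embed (G : sgraph) n (c : vert G) (h : 'I_n -> vert G) :
  injective h -> (forall i, @adj G c (h i)) -> (forall i j, ~~ @adj G (h i) (h j)) ->
  induced_sub (star n) G.
Proof.
move=> inj ch hh; apply: (@embed _ _ G (fun o => if o is Some i then h i else c)).
  move=> [i|] [j|] //=; first by move/inj ->.
  - by move=> e; have := ch i; rewrite e adj_irr.
  - by move=> e; have := ch j; rewrite e adj_irr.
move=> [i|] [j|] //= nij; first by rewrite (negbTE (hh i j)).
  by rewrite adj_sym ch.
by rewrite ch.
Qed.

Lemma bip_embed (G : sgraph) n (f g : 'I_n -> vert G) (e : bool)
  (P : 'I_n -> 'I_n -> bool) (R : rel ('I_n + 'I_n)%type) :
  injective f -> injective g -> (forall i j, f i != g j) ->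
  (forall i j, i != j -> @adj G (f i) (f j)) ->
  (forall i j, i != j -> @adj G (g i) (g j) = e) ->
  (forall i j, @adj G (f i) (g j) = P i j) ->
  (forall i j, R (inl i) (inl j)) -> (forall i j, R (inr i) (inr j) = e) ->
  (forall i j, R (inl i) (inr j) = P i j) -> (forall i j, R (inr i) (inl j) = false) ->
  induced_sub (mkG R) G.
Proof.
move=> fi gi fg ff gg fgP R1 R2 R3 R4.
apply: (@embed _ _ G (fun u => match u with inl i => f i | inr j => g j end)).
  move=> [i|i] [j|j] /= E.
  - by rewrite (fi _ _ E).
  - by move: (fg i j); rewrite E eqxx.
  - by move: (fg j i); rewrite E eqxx.
  - by rewrite (gi _ _ E).
move=> [i|i] [j|j] /= nij.
- rewrite R1 ff //; by apply: contraNneq nij => ->.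
- by rewrite fgP R3 R4 orbF.
- by rewrite adj_sym fgP R3 R4.
- rewrite !R2 gg ?orbb //; by apply: contraNneq nij => ->.
Qed.

Lemma ramsey (T : finType) (r : rel T) : (forall x y, r x y = r y x) ->
  forall a b (S : {set T}), 2 ^ (a + b) <= #|S| ->
  exists A : {set T}, A \subset S /\
   ((a <= #|A| /\ {in A &, forall x y, x != y -> r x y}) \/
    (b <= #|A| /\ {in A &, forall x y, x != y -> ~~ r x y})).
Proof.
move=> sym a b; move: {2}(a + b) (erefl (a + b)) => k; elim: k a b => [|k IH] a b.
  move=> ab0 S _; exists set0; split; first exact: sub0set.
  by left; split; [rewrite cards0; lia | move=> x y; rewrite inE].
case: a => [|a]; first by move=> _ S _; exists set0; split; [exact: sub0set|left; split => // x; rewrite inE].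
case: b => [|b]; first by move=> _ S _; exists set0; split; [exact: sub0set|right; split => // x; rewrite inE].
move=> e S cS.
have : 0 < #|S| by apply: leq_trans cS; rewrite expn_gt0.
case/card_gt0P => v vS.
pose N1 := (S :\ v) :&: [set x | r v x]; pose N0 := (S :\ v) :\: [set x | r v x].
have cN : #|N1| + #|N0| = #|S| - 1 by rewrite cardsID (cardsD1 v S) vS; lia.
have ek : 2 ^ (a.+1 + b.+1) = 2 ^ k + 2 ^ k by rewrite e expnS; lia.
have [big1|big0] : 2 ^ k <= #|N1| \/ 2 ^ k <= #|N0|.
  case: (leqP (2 ^ k) #|N1|) => h; [by left | right].
  have : 0 < 2 ^ k by rewrite expn_gt0.
  lia.
- have [A [sA [[ca cl]|[cb ind]]]] := IH a b.+1 ltac:(lia) N1 ltac:(by rewrite (_ : a + b.+1 = k) //; lia).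
  + exists (v |: A); split.
      apply/subsetP => x; rewrite !inE => /orP [/eqP ->//|xA].
      by move: (subsetP sA x xA); rewrite !inE => /andP [/andP []].
    left; split.
      rewrite cardsU1; have -> : v \notin A.
        by apply/negP => /(subsetP sA); rewrite !inE eqxx /= ?andbF.
      by rewrite add1n ltnS.
    have vx : forall x, x \in A -> r v x.
      by move=> x /(subsetP sA); rewrite !inE => /andP [_].
    move=> x y; rewrite !inE => /orP [/eqP ->|xA] /orP [/eqP ->|yA] nxy.
    * by rewrite eqxx in nxy.
    * exact: vx.
    * by rewrite sym vx.
    * exact: cl.
  + exists A; split; last by right.
    by apply: subset_trans sA _; apply/subsetP => x; rewrite !inE => /andP [/andP []].
- have [A [sA [[ca cl]|[cb ind]]]] := IH a.+1 b ltac:(lia) N0 ltac:(by rewrite (_ : a.+1 + b = k) //; lia).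
  + exists A; split; last by left.
    by apply: subset_trans sA _; apply/subsetP => x; rewrite !inE => /andP [_ /andP []].
  + exists (v |: A); split.
      apply/subsetP => x; rewrite !inE => /orP [/eqP ->//|xA].
      by move: (subsetP sA x xA); rewrite !inE => /andP [_ /andP []].
    right; split.
      rewrite cardsU1; have -> : v \notin A.
        by apply/negP => /(subsetP sA); rewrite !inE eqxx /= ?andbF.
      by rewrite add1n ltnS.
    have vx : forall x, x \in A -> ~~ r v x.
      by move=> x /(subsetP sA); rewrite !inE => /andP [].
    move=> x y; rewrite !inE => /orP [/eqP ->|xA] /orP [/eqP ->|yA] nxy.
    * by rewrite eqxx in nxy.
    * exact: vx.
    * by rewrite sym vx.
    * exact: ind.
Qed.

Lemma ramsey2 (T : finType) (r : rel T) : (forall x y, r x y = r y x) ->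
  forall a (S : {set T}), 2 ^ (a + a) <= #|S| ->
  exists (A : {set T}) (c : bool), [/\ A \subset S, a <= #|A| &
     {in A &, forall x y, x != y -> r x y = c}].
Proof.
move=> sym a S cS; have [A [sA [[ca cl]|[ca cl]]]] := ramsey sym cS.
- by exists A, true; split => // x y xA yA nxy; rewrite cl.
- by exists A, false; split => // x y xA yA nxy; rewrite (negbTE (cl x y xA yA nxy)).
Qed.

Lemma pick_inj (T : finType) (A : {set T}) n : n <= #|A| ->
  exists h : 'I_n -> T, injective h /\ forall i, h i \in A.
Proof.
move=> H; exists (fun i => enum_val (Ordinal (leq_trans (ltn_ord i) H))); split.
  by move=> i j /enum_val_inj [] /val_inj.
by move=> i; exact: enum_valP.
Qed.

Lemma enum_incr L (A : {set 'I_L}) K : 0 < K -> K <= #|A| ->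
  exists h : nat -> 'I_L, (forall i, i < K -> h i \in A) /\
                         (forall i j, i < j -> j < K -> h i < h j).
Proof.
move=> K0 KA; have : 0 < #|A| by apply: leq_trans KA.
case/card_gt0P => a0 a0A.
have sz : size (enum A) = #|A| by rewrite cardE.
exists (fun i => nth a0 (enum A) i); split.
  by move=> i iK; rewrite -mem_enum mem_nth // sz (leq_trans iK).
have srt : sorted (fun a b : 'I_L => a < b) (enum A).
  have -> : enum A = filter (mem A) (enum 'I_L) by rewrite enumT.
  apply: sorted_filter; first by move=> x y z; apply: ltn_trans.
  by have := iota_ltn_sorted 0 L; rewrite -val_enum_ord sorted_map.
move=> i j ij jK; apply: (sorted_ltn_nth (leT := fun a b : 'I_L => a < b)) => //.
- by move=> x y z; apply: ltn_trans.
- by rewrite inE sz; lia.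
- by rewrite inE sz; lia.
Qed.

Lemma build (V : finType) (r : rel V) (Q : {set V}) :
  (forall q q', q \in Q -> q' \in Q -> q != q' -> exists2 z, z \notin Q & r q z != r q' z) ->
  forall L (F : {set V}), F \subset Q -> 2 ^ L <= #|F| ->
  exists (x z : nat -> V) (d : nat -> bool), forall t, t < L ->
    [/\ x t \in F, z t \notin Q, r (x t) (z t) = ~~ d t &
        forall t', t < t' < L -> r (x t') (z t) = d t].
Proof.
move=> D; elim => [|L IH] F sF cF.
  have : 0 < #|F| by [].
  by case/card_gt0P => y0 _; exists (fun _ => y0), (fun _ => y0), (fun _ => true).
have : 1 < #|F| by apply: leq_trans cF; rewrite expnS; have := expn_gt0 2 L; lia.
case/card_gt1P => q [q' [qF q'F nqq]].
have [z0 z0Q dz] := D q q' (subsetP sF q qF) (subsetP sF q' q'F) nqq.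
pose Fb b := [set y in F | r y z0 == b].
have cFb : #|Fb true| + #|Fb false| = #|F|.
  rewrite -(cardsID [set y | r y z0] F); congr (_ + _); apply: eq_card => y; rewrite !inE.
  - by rewrite eqb_id.
  - by rewrite eqbF_neg andbC.
have [b bb] : exists b, 2 ^ L <= #|Fb b|.
  case: (leqP (2 ^ L) #|Fb true|) => h; first by exists true.
  by exists false; move: cF; rewrite expnS; lia.
have [x0 [x0F x0b]] : exists x0, x0 \in F /\ r x0 z0 = ~~ b.
  case: (r q z0 =P ~~ b) => [h|h]; first by exists q.
  exists q'; split => //; move: dz h; destruct b; destruct (r q z0); destruct (r q' z0) => //.
have sFb : Fb b \subset Q.
  by apply: subset_trans sF; apply/subsetP => y; rewrite inE => /andP [].
have [x [z [d H]]] := IH (Fb b) sFb bb.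
exists (fun t => if t is s.+1 then x s else x0), (fun t => if t is s.+1 then z s else z0),
  (fun t => if t is s.+1 then d s else b).
case => [_|s sL]; first split => //.
  case => [//|t'] /andP [_ tL]; have [xF _ _ _] := H t' tL.
  by move: xF; rewrite inE => /andP [_ /eqP].
have [xF zQ xz dd] := H s sL; split => //.
  by move: xF; rewrite inE => /andP [].
case => [|t'] /andP [st tL]; first by rewrite ltn0 in st.
by apply: dd; apply/andP.
Qed.

Section Pattern.
Variable G : sgraph.
Local Notation V := (vert G).
Local Notation adj := (@adj G).
Variables (n : nat) (X Z : nat -> V) (b0 c1 e : bool).
Hypothesis HXZ : forall i j, i < n.+1 -> j < n.+1 ->
  adj (X i) (Z j) = (if i < j then c1 else if i == j then ~~ b0 else b0).
Hypothesis HXX : forall i j, i < n.+1 -> j < n.+1 -> i != j -> adj (X i) (X j).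
Hypothesis HZZ : forall i j, i < n.+1 -> j < n.+1 -> i != j -> adj (Z i) (Z j) = e.
Hypothesis HXnZ : forall i j, i < n.+1 -> j < n.+1 -> X i != Z j.
Hypothesis HZnZ : forall i j, i < n.+1 -> j < n.+1 -> i != j -> Z i != Z j.

Lemma star_from (c0 : nat) (tau : nat -> nat) : c0 < n.+1 ->
  (forall i, i < n -> tau i < n.+1) ->
  (forall i j, i < n -> j < n -> tau i = tau j -> i = j) ->
  (forall i, i < n -> adj (X c0) (Z (tau i))) -> e = false ->
  induced_sub (star n) G.
Proof.
move=> c0n tn ti ad ef.
apply: (@star_embed G n (X c0) (fun i => Z (tau i))).
- move=> i j E; apply/val_inj; apply: ti; try exact: ltn_ord; case: (tau i =P tau j) => [->//|nij0]; have nij := introN eqP nij0; exfalso.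
  by have := HZnZ (tn _ (ltn_ord i)) (tn _ (ltn_ord j)) nij; rewrite E eqxx.
- by move=> i; apply: ad.
- move=> i j; case: (i =P j) => [->|/eqP nij]; first by rewrite adj_irr.
  rewrite HZZ ?ef ?tn //; apply/eqP => /(ti _ _ (ltn_ord i) (ltn_ord j)) E.
  by move: nij; rewrite (_ : i = j) ?eqxx //; apply/val_inj.
Qed.

Lemma bip_from (sigma tau : nat -> nat) (P : 'I_n -> 'I_n -> bool)
  (R : rel ('I_n + 'I_n)%type) :
  (forall i, i < n -> sigma i < n.+1) -> (forall i, i < n -> tau i < n.+1) ->
  (forall i j, i < n -> j < n -> sigma i = sigma j -> i = j) ->
  (forall i j, i < n -> j < n -> tau i = tau j -> i = j) ->
  (forall i j : 'I_n, adj (X (sigma i)) (Z (tau j)) = P i j) ->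
  (forall i j, R (inl i) (inl j)) -> (forall i j, R (inr i) (inr j) = e) ->
  (forall i j, R (inl i) (inr j) = P i j) -> (forall i j, R (inr i) (inl j) = false) ->
  induced_sub (mkG R) G.
Proof.
move=> sn tn si ti HP R1 R2 R3 R4.
apply: (@bip_embed G n (fun i => X (sigma i)) (fun j => Z (tau j)) e P R) => //.
- move=> i j E; apply/val_inj; apply: si; try exact: ltn_ord; case: (sigma i =P sigma j) => [->//|nij0]; have nij := introN eqP nij0; exfalso.
  by have := HXX (sn _ (ltn_ord i)) (sn _ (ltn_ord j)) nij; rewrite E adj_irr.
- move=> i j E; apply/val_inj; apply: ti; try exact: ltn_ord; case: (tau i =P tau j) => [->//|nij0]; have nij := introN eqP nij0; exfalso.
  by have := HZnZ (tn _ (ltn_ord i)) (tn _ (ltn_ord j)) nij; rewrite E eqxx.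
- by move=> i j; apply: HXnZ; [apply: sn | apply: tn].
- move=> i j nij; apply: HXX; try apply: sn => //.
  by apply: contra nij => /eqP /si E; apply/eqP/val_inj/E.
- move=> i j nij; apply: HZZ; try apply: tn => //.
  by apply: contra nij => /eqP /ti E; apply/eqP/val_inj/E.
Qed.

Lemma pattern_forces :
  induced_sub (star n) G \/ induced_sub (MKI n) G \/ induced_sub (MKK n) G \/
  induced_sub (AKK n) G \/ induced_sub (HKK n) G.
Proof.
have idn : forall i, i < n -> i < n.+1 by move=> i; lia.
have idi : forall i j : nat, i < n -> j < n -> i = j -> i = j by [].
case Eb: b0; case Ec: c1; case Ee: e.
-
  do 3 right; left; rewrite /AKK.
  apply: (@bip_from id id (fun i j : 'I_n => (i : nat) != j)) => // i j.
  rewrite HXZ ?idn // Eb Ec; by case: ltngtP.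
- (* anti-matching, independent: star *)
  left; apply: (@star_from 0 S) => //.
  + by move=> i j _ _ [].
  + by move=> i i_n; rewrite HXZ // Ec.
- (* j < i, clique: HKK reversed *)
  do 4 right; rewrite /HKK.
  apply: (@bip_from (fun i => n - i) (fun j => n.-1 - j) (fun i j : 'I_n => (i : nat) <= j)).
  + by move=> i _; lia.
  + by move=> i _; lia.
  + by move=> i j ? ? ?; lia.
  + by move=> i j ? ? ?; lia.
  + move=> i j; have := ltn_ord i; have := ltn_ord j => hj hi.
    rewrite HXZ; [|lia|lia]; rewrite Eb Ec.
    case: ltngtP => h /=.
    * by apply/esym/negP => ?; lia.
    * by apply/esym; lia.
    * by apply/esym/negP => ?; lia.
  + by [].
  + by [].
  + by [].
  + by [].
- (* j < i, independent: star centre X n *)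
  left; apply: (@star_from n id) => //.
  + by move=> i i_n; rewrite (HXZ (ltnSn n) (idn _ i_n)) Ec Eb; case: ltngtP => h //; lia.
-
  do 4 right; rewrite /HKK.
  apply: (@bip_from id id (fun i j : 'I_n => (i : nat) <= j)) => // i j.
  rewrite HXZ ?idn // Eb Ec; by case: ltngtP.
- left; apply: (@star_from 0 S) => //.
  + by move=> i j _ _ [].
  + by move=> i i_n; rewrite HXZ // Ec.
-
  do 2 right; left; rewrite /MKK.
  apply: (@bip_from id id (fun i j : 'I_n => (i : nat) == j)) => // i j.
  rewrite HXZ ?idn // Eb Ec; by case: ltngtP.
- right; left; rewrite /MKI.
  apply: (@bip_from id id (fun i j : 'I_n => (i : nat) == j)) => // i j.
  rewrite HXZ ?idn // Eb Ec; by case: ltngtP.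
Qed.

End Pattern.

Definition M2 n := n.+1.
Definition M1 n := 2 ^ (M2 n + M2 n).
Definition M0 n := 2 ^ (M1 n + M1 n).
Definition LL n := M0 n + M0 n.
Definition N1 n := 2 ^ LL n.

Definition forced (G : sgraph) n :=
  induced_sub (star n) G \/ induced_sub (MKI n) G \/ induced_sub (MKK n) G \/
  induced_sub (AKK n) G \/ induced_sub (HKK n) G.

Section Assembly.
Variable G : sgraph.
Local Notation V := (vert G).
Local Notation adj := (@adj G).

Lemma clique_forces n (Q : {set V}) : clique Q ->
  {in Q &, forall a b, a != b -> cnbhd a != cnbhd b} -> N1 n <= #|Q| -> forced G n.
Proof.
move=> cQ dQ cardQ.
have dist : forall q q', q \in Q -> q' \in Q -> q != q' ->
    exists2 z, z \notin Q & adj q z != adj q' z.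
  move=> q q' qQ q'Q nqq.
  have : [exists z, (z \in cnbhd q) != (z \in cnbhd q')].
    apply: contraR (dQ q q' qQ q'Q nqq) => /existsPn H; apply/eqP/setP => z.
    by move: (H z); rewrite negbK => /eqP.
  case/existsP => z dz.
  have zQ : z \notin Q.
    apply/negP => zQ; move: dz.
    have inQ : forall w, w \in Q -> z \in cnbhd w.
      move=> w wQ; rewrite in_cnbhd; case: (z =P w) => //= /eqP nzw.
      by apply: (cliqueP _ cQ) => //; rewrite eq_sym.
    by rewrite !inQ.
  exists z => //; move: dz; rewrite !in_cnbhd.
  have -> : (z == q) = false by apply/negP => /eqP E; rewrite E qQ in zQ.
  by have -> : (z == q') = false by apply/negP => /eqP E; rewrite E q'Q in zQ.
have [x [z [d Hb]]] := build dist (subxx Q) cardQ.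
pose L := LL n.
pose D b := [set t : 'I_L | d t == b].
have [b0 cD] : exists b, M0 n <= #|D b|.
  have cs : #|D true| + #|D false| = L.
    rewrite -[X in _ = X]card_ord -cardsT -(cardsID [set t : 'I_L | d t] [set: 'I_L]).
    congr (_ + _); apply: eq_card => t; rewrite !inE.
    - by rewrite eqb_id.
    - by rewrite eqbF_neg andbT.
  case: (leqP (M0 n) #|D true|) => h; first by exists true.
  have cs2 : #|D true| + #|D false| = M0 n + M0 n := cs.
  by exists false; lia.
pose col (s t : 'I_L) := if s < t then adj (x s) (z t) else adj (x t) (z s).
have colC : forall s t, col s t = col t s.
  move=> s t; rewrite /col; case: ltngtP => // h.
  by rewrite (_ : s = t) //; apply/val_inj.
have [A1 [c1 [sA1 cA1 hA1]]] := ramsey2 colC cD.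
pose col2 (s t : 'I_L) := adj (z s) (z t).
have col2C : forall s t, col2 s t = col2 t s by move=> s t; rewrite /col2 adj_sym.
have [A2 [e [sA2 cA2 hA2]]] := ramsey2 col2C cA1.
have [h [hA hinc]] := @enum_incr L A2 (M2 n) isT cA2.
have hL : forall i, (h i : nat) < L by move=> i; exact: ltn_ord.
have hD : forall i, i < n.+1 -> d (h i) = b0.
  by move=> i iK; have := subsetP sA1 _ (subsetP sA2 _ (hA i iK)); rewrite inE => /eqP.
have hne : forall i j, i < n.+1 -> j < n.+1 -> i != j -> h i != h j.
  move=> i j iK jK nij; case: (ltngtP i j) => ij.
  - by have := hinc _ _ ij jK; apply: contraTneq => ->; rewrite ltnn.
  - by have := hinc _ _ ij iK; apply: contraTneq => ->; rewrite ltnn.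
  - by rewrite ij eqxx in nij.
have diag : forall i, i < n.+1 -> adj (x (h i)) (z (h i)) = ~~ b0.
  by move=> i iK; have [_ _ -> _] := Hb _ (hL i); rewrite hD.
have below : forall i j, i < n.+1 -> j < n.+1 -> j < i -> adj (x (h i)) (z (h j)) = b0.
  move=> i j iK jK ji; have [_ _ _ dd] := Hb _ (hL j).
  by rewrite dd ?hD // hinc // hL.
apply: (@pattern_forces G n (fun i => x (h i)) (fun i => z (h i)) b0 c1 e).
- move=> i j iK jK; case: ltngtP => ij.
  + have := hA1 _ _ (subsetP sA2 _ (hA i iK)) (subsetP sA2 _ (hA j jK)) (hne i j iK jK _).
    rewrite /col hinc // => <- //; by rewrite neq_ltn ij.
  + exact: below.
  + by rewrite ij diag.
- move=> i j iK jK nij; apply: (cliqueP _ cQ).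
  + by have [] := Hb _ (hL i).
  + by have [] := Hb _ (hL j).
  + wlog ij : i j iK jK nij / i < j.
      move=> W; case: (ltngtP i j) => ij; first exact: W.
      * by rewrite eq_sym; apply: W => //; rewrite eq_sym.
      * by rewrite ij eqxx in nij.
    apply/eqP => E; have := below _ _ jK iK ij; rewrite -E diag //.
    by case: (b0).
- move=> i j iK jK nij; apply: hA2; [exact: hA|exact: hA|exact: hne].
- move=> i j iK jK; apply/eqP => E.
  have [xQ _ _ _] := Hb _ (hL i); have [_ zQ _ _] := Hb _ (hL j).
  by rewrite -E xQ in zQ.
- move=> i j iK jK nij.
  wlog ij : i j iK jK nij / i < j.
    move=> W; case: (ltngtP i j) => ij; first exact: W.
    * by rewrite eq_sym; apply: W => //; rewrite eq_sym.
    * by rewrite ij eqxx in nij.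
  apply/eqP => E; have := below _ _ jK iK ij; rewrite E diag //.
  by case: (b0).
Qed.

Lemma deg_forces n (v : V) (B : {set V}) : (forall b, b \in B -> adj v b) ->
  {in B &, forall a b, a != b -> cnbhd a != cnbhd b} ->
  2 ^ (N1 n + n) <= #|B| -> forced G n.
Proof.
move=> vB dB cB.
have [A [sA [[cA cl]|[cA ind]]]] := ramsey (@adj_sym G) cB.
- apply: (@clique_forces n A) => //.
    by apply/cliqueP => a b aA bA; apply: cl.
  by move=> a b aA bA; apply: dB; apply: (subsetP sA).
- left; have [hh [hi hin]] := pick_inj cA.
  apply: (@star_embed G n v hh hi).
    by move=> i; apply: vB; apply: (subsetP sA).
  move=> i j; case: (i =P j) => [->|/eqP nij]; first by rewrite adj_irr.
  by apply: ind => //; apply: contra nij => /eqP /hi ->.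
Qed.

Lemma twin_deg n : ~ forced G n -> twin_reduced_maxdeg_le G (2 ^ (N1 n + n)).
Proof.
move=> nf A /imsetP [v _ ->].
rewrite leqNgt; apply/negP => big; apply: nf.
pose NB := [set B in twin_classes G | tq_adj (tw v) B].
pose rep (B : {set V}) := odflt v [pick b in B | adj v b].
have repP : forall B, B \in NB -> (rep B \in B) && adj v (rep B).
  move=> B; rewrite inE => /andP [/imsetP [w _ ->]] /andP [ne /existsP [a /andP [aA /existsP [b /andP [bB ab]]]]].
  have bv : b \in cnbhd v by rewrite -(tw_cn aA) in_cnbhd ab orbT.
  have vb : adj v b.
    move: bv; rewrite in_cnbhd => /orP [/eqP E|//].
    by move: ne; rewrite -(tw_eq bB) E eqxx.
  rewrite /rep; case: pickP => [b' //|/(_ b)]; by rewrite bB vb.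
have repT : forall B, B \in NB -> tw (rep B) = B.
  move=> B BN; have /andP [rB _] := repP B BN.
  by move: BN; rewrite inE => /andP [/imsetP [w _ E] _]; rewrite E (tw_eq (x := w)) // -E.
apply: (@deg_forces n v (rep @: NB)).
- by move=> b /imsetP [B BN ->]; have /andP [] := repP B BN.
- move=> a b /imsetP [B1 B1N ->] /imsetP [B2 B2N ->] ne; apply: contraNneq ne => E.
  have : tw (rep B1) = tw (rep B2) by apply/setP => w; rewrite !inE E.
  by rewrite !repT // => ->.
- rewrite card_in_imset; first exact: ltnW.
  by move=> B1 B2 B1N B2N E; rewrite -(repT B1 B1N) -(repT B2 B2N) E.
Qed.

End Assembly.

Unset Implicit Arguments.

Theorem theorem1p5 (C : sgraph -> Prop) : hereditary C ->
  [<-> (exists k, forall G, C G -> omt G <= k /\ cideg G <= k);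
       (exists d, forall G, C G -> twin_reduced_maxdeg_le G d);
       (exists k, forall G, C G -> omt G <= k) /\
         (exists k, forall G, C G -> alphastar G <= k);
       (exists k, forall G, C G -> omt G <= k) /\
         (exists k, forall G, C G -> thetastar G <= k);
       (exists k, forall G, C G -> cdeg G <= k);
       (exists n, forall G, C G ->
          [/\ ~ induced_sub (star n) G, ~ induced_sub (MKI n) G,
              ~ induced_sub (MKK n) G, ~ induced_sub (AKK n) G
            & ~ induced_sub (HKK n) G])].
Proof.
move=> hC.
have i13 : (exists k, forall G, C G -> omt G <= k /\ cideg G <= k) ->
    (exists k, forall G, C G -> omt G <= k) /\ (exists k, forall G, C G -> alphastar G <= k).
  case=> k H; split; exists k.+1 => G CG; have [h1 h2] := H G CG.
  - exact: leq_trans h1 _.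
  - by apply: leq_trans (alpha_cideg G) _.
have i14 : (exists k, forall G, C G -> omt G <= k /\ cideg G <= k) ->
    (exists k, forall G, C G -> omt G <= k) /\ (exists k, forall G, C G -> thetastar G <= k).
  case=> k H; split; exists k => G CG; have [h1 h2] := H G CG => //.
  by apply: leq_trans (theta_cideg G) _.
have i51 : (exists k, forall G, C G -> cdeg G <= k) ->
    (exists k, forall G, C G -> omt G <= k /\ cideg G <= k).
  case=> k H; exists (2 ^ k + k.+1) => G CG; have h := H G CG; split.
  - apply: leq_trans (omt_cdeg G) _; apply: leq_trans (leq_addr _ _).
    exact: leq_pexp2l.
  - apply: leq_trans (cideg_cdeg G) _; apply: leq_trans (leq_addl (2 ^ k) _).
    by rewrite ltnS.
have i25 : (exists d, forall G, C G -> twin_reduced_maxdeg_le G d) ->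
    (exists k, forall G, C G -> cdeg G <= k).
  by case=> d H; exists (2 ^ (d.+1 * d.+1)) => G CG; apply: cdeg_twin; apply: H.
have i62 : (exists n, forall G, C G ->
          [/\ ~ induced_sub (star n) G, ~ induced_sub (MKI n) G,
              ~ induced_sub (MKK n) G, ~ induced_sub (AKK n) G
            & ~ induced_sub (HKK n) G]) ->
    (exists d, forall G, C G -> twin_reduced_maxdeg_le G d).
  case=> n H; exists (2 ^ (N1 n + n)) => G CG; apply: twin_deg.
  have [a b c d e] := H G CG.
  by case=> [//|[//|[//|[//|//]]]].
have i3 : forall k1, (forall G, C G -> omt G <= k1) -> forall n, k1 < n -> forall G, C G ->
    [/\ ~ induced_sub (MKI n) G, ~ induced_sub (MKK n) G, ~ induced_sub (AKK n) G
      & ~ induced_sub (HKK n) G].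
  move=> k1 H n kn G CG; split => I.
  - by have := H _ (hC _ _ CG I); have := omt_MKI n; lia.
  - by have := H _ (hC _ _ CG I); have := omt_MKK n; lia.
  - by have := H _ (hC _ _ CG I); have := omt_AKK n; lia.
  - by have := H _ (hC _ _ CG I); have := omt_HKK n; lia.
have i36 : (exists k, forall G, C G -> omt G <= k) /\ (exists k, forall G, C G -> alphastar G <= k) ->
    (exists n, forall G, C G ->
          [/\ ~ induced_sub (star n) G, ~ induced_sub (MKI n) G,
              ~ induced_sub (MKK n) G, ~ induced_sub (AKK n) G
            & ~ induced_sub (HKK n) G]).
  case=> [[k1 H1] [k2 H2]]; exists (k1 + k2).+1 => G CG.
  have [a b c d] := i3 k1 H1 (k1 + k2).+1 ltac:(lia) G CG; split => // I.
  by have := H2 _ (hC _ _ CG I); have := alpha_star (k1 + k2).+1; lia.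
have i46 : (exists k, forall G, C G -> omt G <= k) /\ (exists k, forall G, C G -> thetastar G <= k) ->
    (exists n, forall G, C G ->
          [/\ ~ induced_sub (star n) G, ~ induced_sub (MKI n) G,
              ~ induced_sub (MKK n) G, ~ induced_sub (AKK n) G
            & ~ induced_sub (HKK n) G]).
  case=> [[k1 H1] [k2 H2]]; exists (k1 + k2).+1 => G CG.
  have [a b c d] := i3 k1 H1 (k1 + k2).+1 ltac:(lia) G CG; split => // I.
  by have := H2 _ (hC _ _ CG I); have := theta_star (k1 + k2).+1; lia.
tfae.
- by move=> h; apply: i62; apply: i36; apply: i13.
- by move=> h; apply: i13; apply: i51; apply: i25.
- by move=> h; apply: i14; apply: i51; apply: i25; apply: i62; apply: i36.
- by move=> h; apply: i25; apply: i62; apply: i46.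
- by move=> h; apply: i36; apply: i13; apply: i51.
- by move=> h; apply: i51; apply: i25; apply: i62.
Qed.
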